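(* Consider the following optimization problem over user association $\mathbf{x}=(x_{ij})$, resource allocation $\mathbf{y}=(y_{ij})$ and power $\mathbf{p}=(p_i)$, $i\in\mathcal I=\{1,\dots,I\}$, $j\in\mathcal J=\{1,\dots,J\}$: \[ \max_{\mathbf x,\mathbf y,\mathbf p}\ \sum_{j\in\mathcal J}\omega_j\log_2\Big(KB\sum_{i\in\mathcal I}y_{ij}\log_2(1+\eta_{ij})\Big) \] subject to $\eta_{ij}=\dfrac{p_i g_{ij}}{\sum_{k\in\mathcal I\setminus\{i\}}d_k p_k g_{kj}+\sigma^2}$ for all $i,j$; $\sum_{i\in\mathcal I}x_{ij}=1$ for all $j$; $d_i=\sum_{j\in\mathcal J}y_{ij}$ for all $i$; $0\le p_i\le P_i$ for all $i$; $0\le d_i\le 1$ for all $i$; $0\le y_{ij}\le x_{ij}$ and $x_{ij}\in\{0,1\}$ for all $i,j$. Let $(\mathbf x^*,\mathbf y^*,\mathbf p^* )$ be an optimal solution, let $d_i^*=\sum_{j\in\mathcal J}y^*_{ij}$, and let $\mathcal J_i=\{j\in\mathcal J: x^*_{ij}=1\}$. Then \[ y^*_{ij}=\frac{\omega_j x^*_{ij} d^*_i}{\sum_{l\in\mathcal J}\omega_l x^*_{il}}\qquad\text{for all } i\in\mathcal I,\ j\in\mathcal J_i, \] where the right-hand side is defined to be $0$ in the case $d_i^*=0$ and $x^*_{ij}=0$ for all $j\in\mathcal J$.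
   Context: Downlink heterogeneous network with $I$ base stations (BSs) and $J$ users. $x_{ij}\in\{0,1\}$ indicates that user $j$ is associated with BS $i$; $y_{ij}$ is the fraction of time-frequency resource blocks BS $i$ allocates to user $j$; $d_i$ is the load of BS $i$; $p_i$ is the per-resource-block transmit power of BS $i$ with maximum $P_i>0$. The constants $K>0$ (number of resource blocks), $B>0$ (bandwidth per block), channel gains $g_{ij}>0$, noise power $\sigma^2>0$ and user priorities $\omega_j>0$ are given. $\eta_{ij}$ is the (load-coupled) average SINR of user $j$ served by BS $i$. *)

(* Defs.v *)
From HB Require Import structures.
From mathcomp Require Import all_boot all_order all_algebra.
From mathcomp Require Import all_classical all_reals.
From mathcomp Require Import ereal exp.
Set Implicit Arguments. Unset Strict Implicit. Unset Printing Implicit Defensive.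
Import Order.TTheory GRing.Theory Num.Theory.
Local Open Scope ring_scope.

Section HetNet.
Variable R : realType.
Variables nI nJ : nat.

Definition log2 (r : R) : R := ln r / ln 2.

Definition elog2 (r : R) : \bar R := if 0 < r then (log2 r)%:E else -oo%E.

Definition load (y : 'I_nI -> 'I_nJ -> R) (i : 'I_nI) : R := \sum_(j < nJ) y i j.

Definition sinr (g : 'I_nI -> 'I_nJ -> R) (sigma2 : R)
  (y : 'I_nI -> 'I_nJ -> R) (p : 'I_nI -> R) (i : 'I_nI) (j : 'I_nJ) : R :=
  p i * g i j / (\sum_(k < nI | k != i) load y k * p k * g k j + sigma2).

Definition rate (K B : R) (g : 'I_nI -> 'I_nJ -> R) (sigma2 : R)
  (y : 'I_nI -> 'I_nJ -> R) (p : 'I_nI -> R) (j : 'I_nJ) : R :=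
  K * B * \sum_(i < nI) y i j * log2 (1 + sinr g sigma2 y p i j).

Definition objective (K B : R) (g : 'I_nI -> 'I_nJ -> R) (sigma2 : R)
  (w : 'I_nJ -> R) (x y : 'I_nI -> 'I_nJ -> R) (p : 'I_nI -> R) : \bar R :=
  (\sum_(j < nJ) (w j)%:E * elog2 (rate K B g sigma2 y p j))%E.

Definition feasible (Pmax : 'I_nI -> R)
  (x y : 'I_nI -> 'I_nJ -> R) (p : 'I_nI -> R) : Prop :=
  [/\ (forall j, \sum_(i < nI) x i j = 1),
      (forall i, 0 <= p i <= Pmax i),
      (forall i, 0 <= load y i <= 1),
      (forall i j, 0 <= y i j <= x i j) &
      (forall i j, x i j = 0 \/ x i j = 1)].

Definition optimal (K B : R) (g : 'I_nI -> 'I_nJ -> R) (sigma2 : R)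
  (w : 'I_nJ -> R) (Pmax : 'I_nI -> R)
  (x y : 'I_nI -> 'I_nJ -> R) (p : 'I_nI -> R) : Prop :=
  feasible Pmax x y p /\
  forall x' y' p', feasible Pmax x' y' p' ->
    (objective K B g sigma2 w x' y' p' <= objective K B g sigma2 w x y p)%E.

End HetNet.

(* Main.v *)
Require Import Defs.
From HB Require Import structures.
From mathcomp Require Import all_boot all_order all_algebra.
From mathcomp Require Import all_classical all_reals.
From mathcomp Require Import ereal exp.
From mathcomp Require Import ring lra.
Import Order.TTheory GRing.Theory Num.Theory.
Local Open Scope ring_scope.

Lemma ln_le_sub1 (R : realType) (u : R) : 0 < u -> ln u <= u - 1.
Proof.
move=> u0; have [->|u1] := eqVneq u 1; first by rewrite ln1 subrr.
have h : ln u != 0.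
  apply/eqP => h0; move/eqP: u1; apply; by rewrite -[u](lnK (x:=u)) ?posrE // h0 expR0.
have := expR_gt1Dx h; rewrite lnK ?posrE // => H; apply/ltW; lra.
Qed.

Lemma ln_lt_sub1 (R : realType) (u : R) : 0 < u -> u != 1 -> ln u < u - 1.
Proof.
move=> u0 u1; have h : ln u != 0.
  apply/eqP => h0; move/eqP: u1; apply; by rewrite -[u](lnK (x:=u)) ?posrE // h0 expR0.
have := expR_gt1Dx h; rewrite lnK ?posrE // => H; lra.
Qed.

Lemma ln_ge_1subV (R : realType) (t : R) : 0 < t -> 1 - t^-1 <= ln t.
Proof.
move=> t0; have ti : 0 < t^-1 by rewrite invr_gt0.
have := @ln_le_sub1 _ _ ti; rewrite lnV ?posrE // => H; lra.
Qed.

Lemma ln_eq_1subV (R : realType) (t : R) : 0 < t -> ln t = 1 - t^-1 -> t = 1.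
Proof.
move=> t0 e; apply/eqP; apply/negPn/negP => t1.
have ti : 0 < t^-1 by rewrite invr_gt0.
have : t^-1 != 1 by rewrite invr_eq1.
move/(@ln_lt_sub1 _ _ ti); rewrite lnV ?posrE // e => H; lra.
Qed.

Section Aux.
Variables (R : realType) (nI nJ : nat).
Variables (K B sigma2 : R) (g : 'I_nI -> 'I_nJ -> R) (w : 'I_nJ -> R).

Lemma obj_fin (x y : 'I_nI -> 'I_nJ -> R) p :
  (forall j, 0 < rate K B g sigma2 y p j) ->
  objective K B g sigma2 w x y p =
    (\sum_(j < nJ) w j * log2 (rate K B g sigma2 y p j))%:E.
Proof.
move=> h; rewrite /objective -sumEFin; apply: eq_bigr => j _.
by rewrite /elog2 h -EFinM.
Qed.

Lemma obj_ninf (x y : 'I_nI -> 'I_nJ -> R) p j :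
  0 < w j -> rate K B g sigma2 y p j <= 0 ->
  objective K B g sigma2 w x y p = -oo%E.
Proof.
move=> wj h; rewrite /objective (bigD1 j) //= /elog2.
rewrite ifF; last by apply/negbTE; rewrite -leNgt.
by rewrite mulrNy gtr0_sg // mul1e addNye.
Qed.
End Aux.

Lemma log2_gt0 (R : realType) (r : R) : 1 < r -> 0 < log2 r.
Proof. by move=> h; rewrite /log2 divr_gt0 // ln_gt0 // ltr1n. Qed.

Theorem theorem1 (R : realType) (nI nJ : nat) (K B sigma2 : R)
  (g : 'I_nI -> 'I_nJ -> R) (w : 'I_nJ -> R) (Pmax : 'I_nI -> R)
  (hK : 0 < K) (hB : 0 < B) (hs : 0 < sigma2)
  (hg : forall i j, 0 < g i j) (hw : forall j, 0 < w j)
  (hP : forall i, 0 < Pmax i)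
  (x y : 'I_nI -> 'I_nJ -> R) (p : 'I_nI -> R) :
  optimal K B g sigma2 w Pmax x y p ->
  forall (i : 'I_nI) (j : 'I_nJ), x i j = 1 ->
    y i j = w j * x i j * load y i / \sum_(l < nJ) w l * x i l.
Proof.
move=> [[hx hp hl hy hb] opt] i0 j0 hx0.
have x0le : forall i j, 0 <= x i j.
  by move=> i j; case: (hb i j) => ->; rewrite ?lexx ?ler01.
have y0le : forall i j, 0 <= y i j by move=> i j; case/andP: (hy i j).
have ynx : forall i j, x i j = 0 -> y i j = 0.
  by move=> i j e; apply/eqP; rewrite eq_le; case/andP: (hy i j) => -> ; rewrite e => ->.
have excl : forall i j k, x i j = 1 -> k != i -> x k j = 0.
  move=> i j k e ki; have := hx j; rewrite (bigD1 i) //= e => e1.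
  have e3 : \sum_(k0 < nI | k0 != i) x k0 j = 0 by lra.
  exact: (psumr_eq0P (fun k _ => x0le k j) e3).
have nJ0 : (0 < nJ)%N by apply: leq_ltn_trans (ltn_ord j0).
pose x0 := fun (i : 'I_nI) (j : 'I_nJ) => ((i == i0)%:R : R).
pose y0 := fun (i : 'I_nI) (j : 'I_nJ) => ((i == i0)%:R / nJ%:R : R).
have nJR : (nJ%:R : R) != 0 by rewrite pnatr_eq0 -lt0n.
have ly0 : forall i, load y0 i = (i == i0)%:R.
  by move=> i; rewrite /load sumr_const card_ord -[_ *+ nJ]mulr_natr divfK.
have f0 : feasible Pmax x0 y0 Pmax.
  split.
  - move=> j; rewrite (bigD1 i0) //= /x0 eqxx big1 ?addr0 //; by move=> i /negbTE ->.
  - by move=> i; rewrite (ltW (hP i)) lexx.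
  - by move=> i; rewrite ly0; case: (i == i0); rewrite /= ?lexx ?ler01.
  - move=> i j; rewrite /y0 /x0; case: (i == i0); rewrite /= ?mul0r ?lexx //.
    by rewrite divr_ge0 ?ler0n //= ler_pdivrMr ?ltr0n // mul1r ler1n.
  - by move=> i j; rewrite /x0; case: (i == i0); [right|left].
have r0 : forall j, 0 < rate K B g sigma2 y0 Pmax j.
  move=> j; rewrite /rate (bigD1 i0) //= big1 ?addr0; last first.
    by move=> i /negbTE; rewrite /y0 => ->; rewrite !mul0r.
  rewrite /y0 eqxx mul1r; apply: mulr_gt0; first exact: mulr_gt0.
  apply: mulr_gt0; first by rewrite invr_gt0 ltr0n.
  apply: log2_gt0; rewrite ltrDl /sinr divr_gt0 ?mulr_gt0 //.
  have : 0 <= \sum_(k < nI | k != i0) load y0 k * Pmax k * g k j.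
    apply: sumr_ge0 => k _; rewrite ly0 !mulr_ge0 ?ler0n // ltW //.
  move=> H; lra.
have rpos : forall j, 0 < rate K B g sigma2 y p j.
  move=> j; rewrite ltNge; apply/negP => hle.
  have := opt _ _ _ f0.
  rewrite (@obj_fin _ _ _ K B sigma2 g w x0 y0 Pmax r0).
  by rewrite (@obj_ninf _ _ _ K B sigma2 g w x y p j (hw j) hle) leeNy_eq.
set d := load y i0.
set W := \sum_(l < nJ) w l * x i0 l.
have wle : forall j, w j * x i0 j <= W.
  move=> j; rewrite /W (bigD1 j) //=.
  have : 0 <= \sum_(l < nJ | l != j) w l * x i0 l.
    by apply: sumr_ge0 => l _; rewrite mulr_ge0 // ltW.
  move=> H; lra.
have hW : 0 < W by apply: lt_le_trans (wle j0); rewrite hx0 mulr1.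
have yled : forall j, y i0 j <= d.
  move=> j; rewrite /d /load (bigD1 j) //=.
  have : 0 <= \sum_(l < nJ | l != j) y i0 l by apply: sumr_ge0.
  move=> H; lra.
have /andP[d0 d1] := hl i0.
pose y' := fun i j => if i == i0 then w j * x i0 j * d / W else y i j.
have hload : forall i, load y' i = load y i.
  move=> i; rewrite /load /y'; case: eqP => [->|_] //.
  by rewrite -!mulr_suml -/W mulrAC divff ?mul1r // gt_eqF.
have hsi : forall i j, sinr g sigma2 y' p i j = sinr g sigma2 y p i j.
  by move=> i j; rewrite /sinr; under eq_bigr do rewrite hload.
have f' : feasible Pmax x y' p.
  split => //.
  - by move=> i; rewrite hload.
  - move=> i j; rewrite /y'; case: eqP => [->|_]; last exact: hy.
    case: (hb i0 j) => e; first by rewrite e mulr0 !mul0r lexx.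
    rewrite e mulr1; apply/andP; split; first by apply: divr_ge0; [apply: mulr_ge0 => //; exact: ltW | exact: ltW].
    rewrite ler_pdivrMr // mul1r; have := wle j; rewrite e mulr1 => H.
    have := mulr_ge0 (ltW (hw j)) (_ : 0 <= 1 - d); rewrite subr_ge0 => /(_ d1) H2; nra.
have hr1 : forall z j, x i0 j = 1 -> (forall i, i != i0 -> z i j = 0) ->
    rate K B g sigma2 z p j = K * B * (z i0 j * log2 (1 + sinr g sigma2 z p i0 j)).
  move=> z j _ h; rewrite /rate (bigD1 i0) //= big1 ?addr0 //.
  by move=> i /h ->; rewrite mul0r.
have yoff : forall j, x i0 j = 1 -> forall i, i != i0 -> y i j = 0.
  by move=> j e i ii; apply: ynx; apply: excl e ii.
have y'off : forall j, x i0 j = 1 -> forall i, i != i0 -> y' i j = 0.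
  by move=> j e i ii; rewrite /y' (negbTE ii); apply: yoff.
have ypos : forall j, x i0 j = 1 -> 0 < y i0 j.
  move=> j e; have := rpos j; rewrite (hr1 y j e (yoff j e)).
  rewrite pmulr_rgt0; last exact: mulr_gt0.
  move=> H.
  rewrite lt_neqAle y0le andbT; apply/eqP => y00.
  by move: H; rewrite -y00 mul0r ltxx.
have dpos : 0 < d by apply: lt_le_trans (yled j0); apply: ypos.
pose t := fun j => if x i0 j == 1 then y' i0 j / y i0 j else 1.
have ht : forall j, 0 < t j /\ rate K B g sigma2 y' p j = rate K B g sigma2 y p j * t j.
  move=> j; rewrite /t; case: eqP => e.
    have yp := ypos j e.
    have y'p : 0 < y' i0 j by rewrite /y' eqxx e mulr1 divr_gt0 // mulr_gt0.
    split; first exact: divr_gt0.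
    rewrite (hr1 y j e (yoff j e)) (hr1 y' j e (y'off j e)) hsi.
    field; exact: lt0r_neq0.
  split => //; rewrite mulr1 /rate; f_equal; apply: eq_bigr => i _.
  rewrite hsi /y'; case: eqP => // ->.
  have e0 : x i0 j = 0 by case: (hb i0 j) => // e1; rewrite e1 in e.
  by rewrite e0 mulr0 !mul0r ynx // mul0r.
have rpos' : forall j, 0 < rate K B g sigma2 y' p j.
  by move=> j; have [t0 ->] := ht j; apply: mulr_gt0.
have hopt := opt _ _ _ f'.
rewrite (@obj_fin _ _ _ K B sigma2 g w x y' p rpos') in hopt.
rewrite (@obj_fin _ _ _ K B sigma2 g w x y p rpos) lee_fin in hopt.
have ln2 : 0 < ln (2 : R) by rewrite ln_gt0 // ltr1n.
have hsum : \sum_(j < nJ) w j * ln (t j) <= 0.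
  have e : \sum_(j < nJ) w j * log2 (rate K B g sigma2 y' p j) =
    \sum_(j < nJ) w j * log2 (rate K B g sigma2 y p j) +
    (\sum_(j < nJ) w j * ln (t j)) / ln 2.
    rewrite mulr_suml -big_split; apply: eq_bigr => j _ /=.
    have [t0 ->] := ht j; rewrite /log2 lnM ?posrE //; field.
    by apply: lt0r_neq0.
  rewrite e in hopt.
  have : (\sum_(j < nJ) w j * ln (t j)) / ln 2 <= 0 by lra.
  rewrite pmulr_lle0 // invr_gt0 //.
have hg0 : \sum_(j < nJ) w j * (1 - (t j)^-1) = 0.
  have e : forall j, w j * (1 - (t j)^-1) = w j * x i0 j - y i0 j * W / d.
    move=> j; rewrite /t; case: eqP => e.
      have yp := ypos j e.
      rewrite /y' eqxx e; field.
      by rewrite !lt0r_neq0 ?hw.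
    have e0 : x i0 j = 0 by case: (hb i0 j) => // e1; rewrite e1 in e.
    by rewrite e0 ynx // invr1 subrr !mulr0 !mul0r subrr.
  under eq_bigr do rewrite e.
  rewrite sumrB -!mulr_suml -/W.
  have -> : \sum_(i < nJ) y i0 i = d by [].
  field; exact: lt0r_neq0.
pose ee := fun j => w j * (ln (t j) - (1 - (t j)^-1)).
have ee0 : forall j, 0 <= ee j.
  move=> j; apply: mulr_ge0; first exact: ltW.
  rewrite subr_ge0; apply: ln_ge_1subV.
  by case: (ht j).
have see : \sum_(j < nJ) ee j = 0.
  apply/eqP; rewrite eq_le sumr_ge0 ?andbT; last by move=> j _; apply: ee0.
  rewrite /ee; under eq_bigr do rewrite mulrBr.
  by rewrite sumrB hg0 subr0.
have := psumr_eq0P (fun j _ => ee0 j) see (i:=j0) isT.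
rewrite /ee => /eqP; rewrite mulf_eq0 gt_eqF //= subr_eq0 => /eqP et.
have t1 := @ln_eq_1subV _ _ (proj1 (ht j0)) et.
move: t1; rewrite /t hx0 eqxx => t1.
have yp := ypos j0 hx0.
have : y' i0 j0 = y i0 j0.
  by rewrite -[y' i0 j0](divfK (lt0r_neq0 yp)) t1 mul1r.
move=> <-; by rewrite /y' eqxx hx0.
Qed.
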